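(* Let $(X,d)$ be a geodesic metric space and let $K_0,K_1,q$ be integers with $1\le K_0<K_1$ and $q\ge 3$. Suppose every $1/q$-bigon in $X$ is $K_0/2$-thin. Suppose there are geodesics $\gamma:[0,a]\to X$, $\gamma':[0,a']\to X$ with $\gamma(0)=\gamma'(0)$, and real numbers $R>0$, $r_0>0$ with $R+r_0\le\min(a,a')$, such that $d(\gamma(R+r),\gamma'(R+r))\in[K_0,K_1]$ for all $r\in(0,r_0)$. Then $$r_0\le \big(q(K_1-K_0)+1\big)\big(2^{qK_1+1}-1\big)qK_1+1.$$
   Context: A geodesic is a map $\gamma:[0,a]\to X$ with $d(\gamma(u),\gamma(v))=|u-v|$. For $q\ge0$, a $(1,q)$-quasigeodesic is a continuous map $\gamma:[0,L]\to X$ with $|t-t'|-q\le d(\gamma(t),\gamma(t'))\le |t-t'|+q$ for all $t,t'\in[0,L]$; its endpoints are $\gamma(0),\gamma(L)$. A $q$-bigon is a pair of $(1,q)$-quasigeodesics with the same endpoints; their images are its sides. For $K\ge0$ a $q$-bigon is $K$-fat if some point of one side is at distance $\ge K$ from (every point of) the other side, and $K$-thin if it is not $K$-fat. *)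

(* Defs.v *)
From Stdlib Require Import Reals.
Open Scope R_scope.

Definition is_metric {X : Type} (d : X -> X -> R) : Prop :=
  (forall x y, 0 <= d x y) /\
  (forall x y, d x y = 0 <-> x = y) /\
  (forall x y, d x y = d y x) /\
  (forall x y z, d x z <= d x y + d y z).

(* gamma : [0,a] -> X, represented as a total function R -> X whose
   values outside [0,a] are irrelevant. *)
Definition is_geodesic {X : Type} (d : X -> X -> R) (gamma : R -> X) (a : R) : Prop :=
  0 <= a /\
  forall u v, 0 <= u <= a -> 0 <= v <= a -> d (gamma u) (gamma v) = Rabs (u - v).

Definition geodesic_space {X : Type} (d : X -> X -> R) : Prop :=
  is_metric d /\
  forall x y : X, exists (gamma : R -> X) (a : R),
    is_geodesic d gamma a /\ gamma 0 = x /\ gamma a = y.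

Definition continuous_on_interval {X : Type} (d : X -> X -> R) (gamma : R -> X) (L : R) : Prop :=
  forall t, 0 <= t <= L -> forall eps, 0 < eps -> exists delta, 0 < delta /\
    forall t', 0 <= t' <= L -> Rabs (t - t') < delta -> d (gamma t) (gamma t') < eps.

Definition is_quasigeodesic {X : Type} (d : X -> X -> R) (q : R) (gamma : R -> X) (L : R) : Prop :=
  0 <= L /\ continuous_on_interval d gamma L /\
  forall t t', 0 <= t <= L -> 0 <= t' <= L ->
    Rabs (t - t') - q <= d (gamma t) (gamma t') <= Rabs (t - t') + q.

Definition is_bigon {X : Type} (d : X -> X -> R) (q : R)
  (g1 : R -> X) (L1 : R) (g2 : R -> X) (L2 : R) : Prop :=
  is_quasigeodesic d q g1 L1 /\ is_quasigeodesic d q g2 L2 /\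
  g1 0 = g2 0 /\ g1 L1 = g2 L2.

Definition fat_from {X : Type} (d : X -> X -> R) (K : R)
  (g1 : R -> X) (L1 : R) (g2 : R -> X) (L2 : R) : Prop :=
  exists t, 0 <= t <= L1 /\ forall s, 0 <= s <= L2 -> K <= d (g1 t) (g2 s).

Definition bigon_fat {X : Type} (d : X -> X -> R) (K : R)
  (g1 : R -> X) (L1 : R) (g2 : R -> X) (L2 : R) : Prop :=
  fat_from d K g1 L1 g2 L2 \/ fat_from d K g2 L2 g1 L1.

Definition bigon_thin {X : Type} (d : X -> X -> R) (K : R)
  (g1 : R -> X) (L1 : R) (g2 : R -> X) (L2 : R) : Prop :=
  ~ bigon_fat d K g1 L1 g2 L2.

(* Main.v *)
Require Import Defs.
From Stdlib Require Import Reals Lra Lia Psatz.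
Open Scope R_scope.

Definition concat {X : Type} (c1 : R -> X) (l1 : R) (c2 : R -> X) : R -> X :=
  fun t => if Rle_dec t l1 then c1 t else c2 (t - l1).

Lemma concat_lip {X : Type} (d : X -> X -> R) (c1 c2 : R -> X) (l1 l2 : R) :
  (forall x y, d x y = d y x) ->
  (forall x y z, d x z <= d x y + d y z) ->
  0 <= l1 -> 0 <= l2 ->
  (forall u v, 0 <= u <= l1 -> 0 <= v <= l1 -> d (c1 u) (c1 v) = Rabs (u - v)) ->
  (forall u v, 0 <= u <= l2 -> 0 <= v <= l2 -> d (c2 u) (c2 v) = Rabs (u - v)) ->
  c1 l1 = c2 0 ->
  forall t t', 0 <= t <= l1 + l2 -> 0 <= t' <= l1 + l2 ->
    d (concat c1 l1 c2 t) (concat c1 l1 c2 t') <= Rabs (t - t').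
Proof.
  intros Hs Ht Hl1 Hl2 H1 H2 Hj.
  assert (mixed: forall t t', 0 <= t <= l1 -> l1 < t' <= l1 + l2 ->
            d (c1 t) (c2 (t' - l1)) <= Rabs (t - t')).
  { intros t t' Ht1 Ht2.
    eapply Rle_trans. apply (Ht _ (c1 l1)).
    rewrite (H1 t l1) by lra. rewrite Hj. rewrite (H2 0 (t' - l1)) by lra.
    rewrite (Rabs_left1 (t - l1)) by lra.
    rewrite (Rabs_left1 (0 - (t' - l1))) by lra.
    rewrite (Rabs_left1 (t - t')) by lra. lra. }
  intros t t' Ht1 Ht2. unfold concat.
  destruct (Rle_dec t l1); destruct (Rle_dec t' l1).
  - rewrite H1 by lra. lra.
  - apply mixed; lra.
  - rewrite Hs. rewrite Rabs_minus_sym. apply mixed; lra.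
  - rewrite H2 by lra. replace (t - l1 - (t' - l1)) with (t - t') by ring. lra.
Qed.

Lemma concat_0 {X : Type} (c1 c2 : R -> X) (l1 : R) :
  0 <= l1 -> concat c1 l1 c2 0 = c1 0.
Proof. intros. unfold concat. destruct (Rle_dec 0 l1); [reflexivity|lra]. Qed.

Lemma concat_end {X : Type} (c1 c2 : R -> X) (l1 l2 : R) :
  0 <= l2 -> c1 l1 = c2 0 -> concat c1 l1 c2 (l1 + l2) = c2 l2.
Proof.
  intros H Hj. unfold concat. destruct (Rle_dec (l1 + l2) l1).
  - assert (l2 = 0) by lra. subst l2. rewrite Rplus_0_r. exact Hj.
  - f_equal; ring.
Qed.

Lemma quasi_of_lip {X : Type} (d : X -> X -> R) (g : R -> X) (L e : R) :
  (forall x y, d x y = d y x) ->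
  (forall x y z, d x z <= d x y + d y z) ->
  0 <= L ->
  (forall t t', 0 <= t <= L -> 0 <= t' <= L -> d (g t) (g t') <= Rabs (t - t')) ->
  L <= d (g 0) (g L) + e -> 0 <= e -> is_quasigeodesic d e g L.
Proof.
  intros Hs Ht HL Hlip Hlen He. split; [lra|]. split.
  - intros t Ht0 eps Heps. exists eps. split; auto. intros t' Ht' Hd.
    eapply Rle_lt_trans; [apply Hlip; auto|]. exact Hd.
  - intros t t' H1 H2. split.
    + assert (h0t: d (g 0) (g t) <= t)
        by (specialize (Hlip 0 t ltac:(lra) H1); rewrite Rabs_left1 in Hlip by lra; lra).
      assert (h0t': d (g 0) (g t') <= t')
        by (specialize (Hlip 0 t' ltac:(lra) H2); rewrite Rabs_left1 in Hlip by lra; lra).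
      assert (htL: d (g t) (g L) <= L - t)
        by (specialize (Hlip t L H1 ltac:(lra)); rewrite Rabs_left1 in Hlip by lra; lra).
      assert (ht'L: d (g t') (g L) <= L - t')
        by (specialize (Hlip t' L H2 ltac:(lra)); rewrite Rabs_left1 in Hlip by lra; lra).
      pose proof (Ht (g 0) (g t) (g L)) as T1. pose proof (Ht (g t) (g t') (g L)) as T2.
      pose proof (Ht (g 0) (g t') (g L)) as T3. pose proof (Ht (g t') (g t) (g L)) as T4.
      rewrite (Hs (g t') (g t)) in T4.
      destruct (Rle_dec t t').
      * rewrite Rabs_left1 by lra. lra.
      * rewrite Rabs_right by lra. lra.
    + apply Rle_trans with (Rabs (t - t')); [apply Hlip; auto | lra].
Qed.

Theorem theorem1p4 (X : Type) (d : X -> X -> R) (K0 K1 q : nat)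
  (hX : geodesic_space d)
  (hK0 : (1 <= K0)%nat) (hK01 : (K0 < K1)%nat) (hq : (3 <= q)%nat)
  (hthin : forall (g1 : R -> X) (L1 : R) (g2 : R -> X) (L2 : R),
      is_bigon d (/ INR q) g1 L1 g2 L2 -> bigon_thin d (INR K0 / 2) g1 L1 g2 L2)
  (gamma gamma' : R -> X) (a a' : R)
  (hg : is_geodesic d gamma a) (hg' : is_geodesic d gamma' a')
  (h0 : gamma 0 = gamma' 0)
  (R0 r0 : R) (hR : 0 < R0) (hr0 : 0 < r0) (hRr : R0 + r0 <= Rmin a a')
  (hdist : forall r, 0 < r < r0 ->
      INR K0 <= d (gamma (R0 + r)) (gamma' (R0 + r)) <= INR K1) :
  r0 <= (INR q * (INR K1 - INR K0) + 1) * (2 ^ (q * K1 + 1) - 1) * INR q * INR K1 + 1.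
Proof.
  destruct hX as [[Hnn [Hz [Hs Ht]]] Hgeo].
  destruct hg as [ha Hg]. destruct hg' as [ha' Hg'].
  assert (Hmin: R0 + r0 <= a /\ R0 + r0 <= a').
  { unfold Rmin in hRr. destruct (Rle_dec a a'); lra. }
  destruct Hmin as [Ha Ha'].
  assert (HQ: 3 <= INR q). { replace 3 with (INR 3) by (simpl; lra). apply le_INR. exact hq. }
  assert (HK0: 1 <= INR K0). { replace 1 with (INR 1) by reflexivity. apply le_INR. exact hK0. }
  assert (HK1: INR K0 + 1 <= INR K1). { rewrite <- S_INR. apply le_INR. exact hK01. }
  pose (eps := / INR q).
  assert (Heps: 0 < eps) by (unfold eps; apply Rinv_0_lt_compat; lra).
  pose (E := fun s T => s + d (gamma s) (gamma' T) - T).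
  assert (Horig: forall u, 0 <= u <= a -> d (gamma 0) (gamma u) = u).
  { intros. rewrite Hg by lra. rewrite Rabs_left1 by lra. ring. }
  assert (Horig': forall u, 0 <= u <= a' -> d (gamma' 0) (gamma' u) = u).
  { intros. rewrite Hg' by lra. rewrite Rabs_left1 by lra. ring. }
  assert (Hlow: forall u v, 0 <= u <= a -> 0 <= v <= a' ->
            v - u <= d (gamma u) (gamma' v) /\ u - v <= d (gamma u) (gamma' v)).
  { intros u v Hu Hv. split.
    - pose proof (Ht (gamma' 0) (gamma u) (gamma' v)) as H.
      rewrite (Horig' v Hv) in H. rewrite <- h0 in H. rewrite (Horig u Hu) in H. lra.
    - pose proof (Ht (gamma 0) (gamma' v) (gamma u)) as H.
      rewrite (Horig u Hu) in H. rewrite h0 in H. rewrite (Horig' v Hv) in H.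
      rewrite (Hs (gamma' v) (gamma u)) in H. lra. }
  assert (Hf: forall u, R0 < u < R0 + r0 -> INR K0 <= d (gamma u) (gamma' u) <= INR K1).
  { intros u Hu. pose proof (hdist (u - R0) ltac:(lra)) as H.
    replace (R0 + (u - R0)) with u in H by ring. exact H. }
  assert (Hfar: forall u v, R0 < u < R0 + r0 -> 0 <= v <= a' ->
            INR K0 / 2 <= d (gamma u) (gamma' v)).
  { intros u v Hu Hv. destruct (Hf u Hu) as [Hf1 Hf2].
    destruct (Hlow u v ltac:(lra) Hv) as [Hl1 Hl2].
    pose proof (Ht (gamma u) (gamma' v) (gamma' u)) as H.
    rewrite (Hg' v u) in H by lra.
    destruct (Rle_dec u v).
    - rewrite Rabs_right in H by lra. lra.
    - rewrite Rabs_left1 in H by lra. lra. }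
  assert (HE0: forall x y, 0 <= x <= a -> 0 <= y <= a' -> 0 <= E x y).
  { intros x y Hx Hy. unfold E. destruct (Hlow x y Hx Hy). lra. }
  assert (HEK: forall x y, R0 < x -> x <= y -> y < R0 + r0 -> E x y <= INR K1).
  { intros x y Hx Hxy Hy. unfold E. destruct (Hf x ltac:(lra)) as [Hf1 Hf2].
    pose proof (Ht (gamma x) (gamma' x) (gamma' y)) as H.
    rewrite (Hg' x y) in H by lra. rewrite Rabs_left1 in H by lra. lra. }
  assert (Hnofat: forall x k y, R0 < x -> x <= k -> k + INR K1 <= y -> y < R0 + r0 ->
            eps < E x k - E x y \/ eps < E (k + INR K1) y - E x y).
  { intros x k y Hx Hxk Hky Hy.
    remember (k + INR K1) as u eqn:Hu.
    destruct (Rlt_le_dec eps (E x k - E x y)) as [Hc|Hc1]; [left; exact Hc|].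
    destruct (Rlt_le_dec eps (E u y - E x y)) as [Hc|Hc2]; [right; exact Hc|].
    exfalso. unfold E in Hc1, Hc2.
    destruct (Hgeo (gamma u) (gamma' y)) as [d1 [l1 [[Hl1 Hd1] [Hd10 Hd1l]]]].
    destruct (Hgeo (gamma x) (gamma' k)) as [d2 [l2 [[Hl2 Hd2] [Hd20 Hd2l]]]].
    assert (El1: l1 = d (gamma u) (gamma' y)).
    { rewrite <- Hd10, <- Hd1l. rewrite Hd1 by lra. rewrite Rabs_left1 by lra. ring. }
    assert (El2: l2 = d (gamma x) (gamma' k)).
    { rewrite <- Hd20, <- Hd2l. rewrite Hd2 by lra. rewrite Rabs_left1 by lra. ring. }
    pose (g1 := concat (fun t => gamma (x + t)) (u - x) d1).
    pose (g2 := concat d2 l2 (fun t => gamma' (k + t))).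
    assert (Hj1: gamma (x + (u - x)) = d1 0) by (rewrite Hd10; f_equal; ring).
    assert (Hj2: d2 l2 = gamma' (k + 0)) by (rewrite Hd2l; f_equal; ring).
    assert (Hgeo1: forall s t, 0 <= s <= u - x -> 0 <= t <= u - x ->
              d (gamma (x + s)) (gamma (x + t)) = Rabs (s - t)).
    { intros s t Hs1 Ht1. rewrite Hg by lra. f_equal; ring. }
    assert (Hgeo2: forall s t, 0 <= s <= y - k -> 0 <= t <= y - k ->
              d (gamma' (k + s)) (gamma' (k + t)) = Rabs (s - t)).
    { intros s t Hs1 Ht1. rewrite Hg' by lra. f_equal; ring. }
    apply (hthin g1 (u - x + l1) g2 (l2 + (y - k))).
    - split; [|split; [|split]].
      + apply quasi_of_lip; [exact Hs | exact Ht | lra | | | apply Rlt_le; exact Heps].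
        * apply concat_lip; auto; lra.
        * unfold g1. rewrite concat_0 by lra. rewrite concat_end by (auto; lra).
          rewrite Rplus_0_r, Hd1l. change (/ INR q) with eps. lra.
      + apply quasi_of_lip; [exact Hs | exact Ht | lra | | | apply Rlt_le; exact Heps].
        * apply concat_lip; auto; lra.
        * unfold g2. rewrite concat_0 by lra. rewrite concat_end by (auto; lra).
          rewrite Hd20. replace (k + (y - k)) with y by ring. change (/ INR q) with eps. lra.
      + unfold g1, g2. rewrite !concat_0 by lra. rewrite Hd20. f_equal; ring.
      + unfold g1, g2. rewrite concat_end by (auto; lra). rewrite concat_end by (auto; lra).
        rewrite Hd1l. f_equal; ring.
    - left. exists (u - x). split; [lra|]. intros s Hs0.
      assert (Hg1u: g1 (u - x) = gamma u).
      { unfold g1, concat. destruct (Rle_dec (u - x) (u - x)); [f_equal; ring | lra]. }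
      rewrite Hg1u. unfold g2, concat. destruct (Rle_dec s l2).
      + assert (A1: d (gamma x) (d2 s) = s).
        { rewrite <- Hd20. rewrite Hd2 by lra. rewrite Rabs_left1 by lra. ring. }
        assert (A2: d (d2 s) (gamma' k) = l2 - s).
        { rewrite <- Hd2l. rewrite Hd2 by lra. rewrite Rabs_left1 by lra. ring. }
        assert (A3: d (gamma x) (gamma u) = u - x).
        { rewrite Hg by lra. rewrite Rabs_left1 by lra. ring. }
        destruct (Hlow u k ltac:(lra) ltac:(lra)) as [_ A4].
        assert (A5: E x k <= INR K1) by (apply HEK; lra).
        unfold E in A5.
        pose proof (Ht (gamma x) (d2 s) (gamma u)) as T1.
        pose proof (Ht (gamma u) (d2 s) (gamma' k)) as T2.
        rewrite (Hs (d2 s) (gamma u)) in T1. lra.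
      + apply Hfar; lra. }
  assert (Hind: forall n : nat, forall x y, R0 < x -> y < R0 + r0 ->
            INR K1 * (2 ^ n - 1) <= y - x -> E x y + INR n * eps <= INR K1).
  { induction n as [|n IH]; intros x y Hx Hy Hxy.
    - simpl in Hxy. simpl. rewrite Rmult_0_l, Rplus_0_r. apply HEK; lra.
    - assert (HP: 1 <= 2 ^ n) by (apply pow_R1_Rle; lra).
      simpl in Hxy.
      pose (k := x + (y - x - INR K1) / 2).
      assert (Hk1: INR K1 * (2 ^ n - 1) <= k - x) by (unfold k; nra).
      assert (Hk0: 0 <= INR K1 * (2 ^ n - 1)) by (apply Rmult_le_pos; lra).
      assert (Hk2: INR K1 * (2 ^ n - 1) <= y - (k + INR K1)) by (unfold k in *; nra).
      pose proof (IH x k Hx ltac:(lra) Hk1) as I1.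
      pose proof (IH (k + INR K1) y ltac:(lra) Hy Hk2) as I2.
      rewrite S_INR.
      destruct (Hnofat x k y Hx ltac:(lra) ltac:(lra) Hy); nra. }
  assert (HP: 1 <= 2 ^ (q * K1 + 1)) by (apply pow_R1_Rle; lra).
  destruct (Rle_dec r0 (INR K1 * (2 ^ (q * K1 + 1) - 1))) as [Hle|Hgt].
  - assert (H1: 1 <= INR q * (INR K1 - INR K0) + 1) by nra.
    assert (H2: 0 <= ((INR q * (INR K1 - INR K0) + 1) * INR q - 1)
                      * ((2 ^ (q * K1 + 1) - 1) * INR K1)).
    { apply Rmult_le_pos; nra. }
    nra.
  - exfalso.
    pose (W := INR K1 * (2 ^ (q * K1 + 1) - 1)).
    assert (HW: 0 <= W) by (unfold W; apply Rmult_le_pos; lra).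
    pose (x := R0 + (r0 - W) / 2).
    pose proof (Hind (q * K1 + 1)%nat x (x + W)) as H.
    assert (Hn: INR (q * K1 + 1) * eps = INR K1 + eps).
    { unfold eps. rewrite plus_INR, mult_INR. simpl. field. lra. }
    rewrite Hn in H.
    fold W in Hgt.
    assert (0 <= E x (x + W)) by (apply HE0; unfold x; lra).
    unfold x in *. specialize (H ltac:(lra) ltac:(lra) ltac:(unfold W; lra)). lra.
Qed.
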